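(* Let $A,B$ be $n\times n$ complex matrices. Then \[ \|A+B\|_F\le \sqrt{\frac{1+\sqrt{2}}{2}}\,\big\||A|+|B|\big\|_F . \]
   Context: For an $n\times n$ complex matrix $A$, $|A|:=(A^*A)^{1/2}$ denotes the operator absolute value (positive semidefinite square root), where $A^*$ is the conjugate transpose. $\|A\|_F=(\operatorname{tr}|A|^2)^{1/2}=(\operatorname{tr}A^*A)^{1/2}$ is the Frobenius norm. *)

(* Defs.v *)
From mathcomp Require Import all_boot all_algebra.
From mathcomp Require Import complex reals.
Set Implicit Arguments.
Unset Strict Implicit.
Unset Printing Implicit Defensive.
Import GRing.Theory Num.Theory.
Local Open Scope ring_scope.

Section Defs.
Variable C : numClosedFieldType.

Definition adjmx n (A : 'M[C]_n) : 'M[C]_n := map_mx Num.conj A^T.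

(* operator absolute value |A| := (A^* A)^{1/2}, the positive semidefinite
   square root, defined by functional calculus on the (normal, indeed PSD)
   matrix A^* A = U^{-1} diag(d) U  (U unitary, d = eigenvalues >= 0):
   |A| = U^{-1} diag(sqrt d) U. *)
Definition absmx n (A : 'M[C]_n) : 'M[C]_n :=
  let H := adjmx A *m A in
  let U := spectralmx H in
  invmx U *m diag_mx (map_mx (fun x : C => sqrtC x) (spectral_diag H)) *m U.

Definition frobnorm n (A : 'M[C]_n) : C := sqrtC (\tr (adjmx A *m A)).
End Defs.

(* Main.v *)
Require Import Defs.
From mathcomp Require Import all_boot all_algebra.
From mathcomp Require Import complex reals.
From mathcomp Require Import order ring.
Import Order.POrderTheory GRing.Theory Num.Theory.
Local Open Scope ring_scope.


Section S.
Context {C : numClosedFieldType}.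
Context {n : nat}.
Implicit Types X Y : 'M[C]_n.

Lemma adjmxE X : adjmx X = (X ^t* )%sesqui.
Proof. by []. Qed.

Lemma adjmxM X Y : adjmx (X *m Y) = adjmx Y *m adjmx X.
Proof. by rewrite /adjmx trmx_mul map_mxM. Qed.

Lemma adjmxK X : adjmx (adjmx X) = X.
Proof. exact: trmxCK. Qed.

Lemma adjmxD X Y : adjmx (X + Y) = adjmx X + adjmx Y.
Proof. by rewrite /adjmx linearD /= map_mxD. Qed.

Lemma adjmxB X Y : adjmx (X - Y) = adjmx X - adjmx Y.
Proof. by rewrite /adjmx linearB /= map_mxB. Qed.

Lemma adjmxZ (a : C) X : adjmx (a *: X) = a^* *: adjmx X.
Proof. by apply/matrixP=> i j; rewrite !mxE rmorphM. Qed.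

Lemma adjmx1 : adjmx (1%:M : 'M[C]_n) = 1%:M.
Proof. by rewrite /adjmx trmx1 map_mx1. Qed.

Lemma tr_adjmx X : \tr (adjmx X) = (\tr X)^*.
Proof. by rewrite /mxtrace rmorph_sum; apply: eq_bigr => i _; rewrite !mxE. Qed.

Lemma adj_diag_ge0 m (X : 'M[C]_(m, n)) i : 0 <= ((X ^t* )%sesqui *m X) i i.
Proof.
rewrite !mxE; apply: sumr_ge0 => k _; rewrite !mxE -normCKC.
by rewrite exprn_ge0.
Qed.

Lemma tr_adj_ge0 X : 0 <= \tr (adjmx X *m X).
Proof. by apply: sumr_ge0 => i _; apply: adj_diag_ge0. Qed.

Lemma tr_adj_eq0 X : \tr (adjmx X *m X) = 0 -> X = 0.
Proof.
move=> /psumr_eq0P H; apply/matrixP => k i.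
have := H (fun j _ => @adj_diag_ge0 n X j) i isT.
rewrite !mxE => /psumr_eq0P H2.
have H3 : forall j, true -> 0 <= (X ^t* )%sesqui i j * X j i.
  by move=> j _; rewrite !mxE -normCKC exprn_ge0.
have := H2 H3 k isT.
rewrite !mxE -normCKC => /eqP.
by rewrite expf_eq0 /= normr_eq0 => /eqP ->.
Qed.
End S.


Section FC.
Context {C : numClosedFieldType}.
Context {n : nat}.
Variable H : 'M[C]_n.
Let U := spectralmx H.
Let d := spectral_diag H.

Definition fc (f : C -> C) := invmx U *m diag_mx (map_mx f d) *m U.

Lemma UV : U *m invmx U = 1%:M.
Proof. by rewrite mulmxV // spectral_unit. Qed.

Lemma invU : invmx U = adjmx U.
Proof. by rewrite invmx_unitary // spectral_unitarymx. Qed.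

Lemma fcM f g : fc f *m fc g = fc (fun x => f x * g x).
Proof.
rewrite /fc !mulmxA -[_ *m U *m invmx U]mulmxA UV mulmx1.
rewrite -[_ *m diag_mx _ *m diag_mx _]mulmxA mulmx_diag; congr (_ *m _ *m _).
by apply/matrixP=> i j; rewrite !mxE.
Qed.

Lemma fc_ext f g : (forall i, f (d 0 i) = g (d 0 i)) -> fc f = fc g.
Proof.
move=> fg; rewrite /fc; congr (_ *m diag_mx _ *m _).
by apply/matrixP=> i j; rewrite !mxE ord1 fg.
Qed.

Lemma fc_adj f : (forall i, (f (d 0 i))^* = f (d 0 i)) -> adjmx (fc f) = fc f.
Proof.
move=> fr; rewrite /fc !adjmxM invU adjmxK mulmxA; congr (_ *m _ *m _).
apply/matrixP=> i j; rewrite !mxE.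
by case: (eqVneq i j) => [->|nij]; rewrite ?mulr1n ?mulr0n ?fr ?conjC0.
Qed.

Lemma fc_id : H \is normalmx -> fc id = H.
Proof.
move=> /orthomx_spectralP HE; rewrite [RHS]HE /fc; congr (_ *m diag_mx _ *m _).
by apply/matrixP=> i j; rewrite !mxE.
Qed.

Lemma d_adj (A : 'M[C]_n) : H = adjmx A *m A -> forall i, 0 <= d 0 i.
Proof.
move=> HA i.
have HN : H \is normalmx.
  apply/normalmxP; rewrite -!adjmxE HA adjmxM adjmxK //.
have E : U *m H *m adjmx U = diag_mx d.
  rewrite {1}(orthomx_spectralP HN) -/U -/d -invU !mulmxA UV mul1mx.
  by rewrite -mulmxA UV mulmx1.
have := @adj_diag_ge0 C n n (A *m adjmx U) i.
by rewrite -adjmxE adjmxM adjmxK !mulmxA -(mulmxA U) -HA E mxE eqxx mulr1n.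
Qed.
End FC.


Section AMGM.
Variable C : numClosedFieldType.
Variable n : nat.
Implicit Types X Y : 'M[C]_n.

Lemma amgm X Y (l : C) : 0 < l ->
  \tr (adjmx X *m Y) + \tr (adjmx Y *m X) <=
  l * \tr (adjmx X *m X) + l^-1 * \tr (adjmx Y *m Y).
Proof.
move=> hl; have := tr_adj_ge0 (l *: X - Y).
rewrite adjmxB adjmxZ (geC0_conj (ltW hl)) mulmxBl !mulmxBr -!scalemxAl -!scalemxAr.
rewrite !linearB !linearZ /=.
set a := \tr (adjmx X *m X); set b := \tr (adjmx X *m Y).
set c := \tr (adjmx Y *m X); set e := \tr (adjmx Y *m Y).
move=> h; rewrite -subr_ge0.
have -> : l * a + l^-1 * e - (b + c) = l^-1 * (l * (l * a) - l * b - (l * c - e)).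
  by field; rewrite gt_eqF.
by apply: mulr_ge0 => //; rewrite invr_ge0 ltW.
Qed.
End AMGM.


Section Proj.
Context {C : numClosedFieldType} {n : nat}.
Implicit Types M G : 'M[C]_n.

Lemma proj_le M G : adjmx G = G -> G *m G = G ->
  \tr (adjmx M *m G *m M) <= \tr (adjmx M *m M).
Proof.
move=> hG hGG; rewrite -subr_ge0.
have hGGl : forall X : 'M[C]_n, X *m G *m G = X *m G.
  by move=> X; rewrite -mulmxA hGG.
have := tr_adj_ge0 ((1%:M - G) *m M).
rewrite adjmxM adjmxB adjmx1 hG !(mulmxBl, mulmxBr, mul1mx, mulmx1) !mulmxA hGGl.
by rewrite !linearB /= subrr subr0.
Qed.

Lemma adjmx_adj M : adjmx M = (M ^t* )%sesqui. Proof. by []. Qed.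
End Proj.


Section Key.
Context {C : numClosedFieldType} {n : nat}.
Variables A P P' : 'M[C]_n.
Hypothesis hP : adjmx P = P.
Hypothesis hP' : adjmx P' = P'.
Hypothesis hPP : P *m P = adjmx A *m A.
Hypothesis hPP'P : P *m P' *m P = P.
Hypothesis hP'PP' : P' *m P *m P' = P'.
Hypothesis hPc : P *m P' = P' *m P.

Lemma lA {X Y Z : 'M[C]_n} (W : 'M[C]_n) : X *m Y = Z -> W *m X *m Y = W *m Z.
Proof. by move=> <-; rewrite mulmxA. Qed.

Lemma lA3 {X Y Z V : 'M[C]_n} (W : 'M[C]_n) : X *m Y *m Z = V -> W *m X *m Y *m Z = W *m V.
Proof. by move=> <-; rewrite !mulmxA. Qed.

Lemma polar : A *m P' *m P = A.
Proof.
apply/eqP; rewrite -subr_eq0; apply/eqP/tr_adj_eq0.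
rewrite adjmxB !adjmxM hP hP' !(mulmxBl, mulmxBr) !mulmxA !(lA _ (esym hPP)) -hPP.
rewrite !(lA3 _ hPP'P) ?hPP'P !mulmxA ?(lA3 _ hPP'P) ?hPP'P ?(lA3 _ hPP'P) ?hPP'P.
by rewrite !subrr linear0.
Qed.

Lemma hW : adjmx (A *m P') *m (A *m P') = P *m P'.
Proof.
rewrite adjmxM hP' !mulmxA (lA _ (esym hPP)) !mulmxA -hPc.
by rewrite hPP'P.
Qed.

Lemma projW : (A *m P') *m adjmx (A *m P') *m ((A *m P') *m adjmx (A *m P'))
   = (A *m P') *m adjmx (A *m P').
Proof.
rewrite mulmxA -(mulmxA _ (adjmx _)) hW.
rewrite adjmxM hP' !mulmxA (lA3 _ hP'PP') //.
Qed.
End Key.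

Section Key2.
Context {C : numClosedFieldType} {n : nat}.
Variables A P P' R B Q Q' L : 'M[C]_n.
Hypothesis hP : adjmx P = P.
Hypothesis hP' : adjmx P' = P'.
Hypothesis hR : adjmx R = R.
Hypothesis hPP : P *m P = adjmx A *m A.
Hypothesis hPP'P : P *m P' *m P = P.
Hypothesis hP'PP' : P' *m P *m P' = P'.
Hypothesis hPc : P *m P' = P' *m P.
Hypothesis hRR : R *m R = P.
Hypothesis hQ : adjmx Q = Q.
Hypothesis hQ' : adjmx Q' = Q'.
Hypothesis hL : adjmx L = L.
Hypothesis hQQ : Q *m Q = adjmx B *m B.
Hypothesis hQQ'Q : Q *m Q' *m Q = Q.
Hypothesis hQ'QQ' : Q' *m Q *m Q' = Q'.
Hypothesis hQc : Q *m Q' = Q' *m Q.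
Hypothesis hLL : L *m L = Q.

Let pA := polar _ _ _ hP hP' hPP hPP'P.
Let pB := polar _ _ _ hQ hQ' hQQ hQQ'Q.

Let W := A *m P'.
Let Z := B *m Q'.
Let X := L *m adjmx Z *m W *m R.
Let Y := L *m R.

Ltac rot := rewrite [in LHS]mxtrace_mulC !mulmxA.
Ltac adjs := rewrite ?adjmxM ?adjmxK ?hP ?hP' ?hR ?hQ ?hQ' ?hL ?adjmxM ?adjmxK !mulmxA.

Lemma e1 : \tr (adjmx X *m Y) = \tr (adjmx A *m B).
Proof.
rewrite -[in RHS]pA /X /Y /W /Z; adjs.
by rewrite (lA _ hLL) (lA3 _ pB); rot; rewrite hRR.
Qed.

Lemma e2 : \tr (adjmx Y *m X) = \tr (adjmx B *m A).
Proof.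
rewrite -[in RHS]pA -[in RHS]pB /X /Y /W /Z; adjs.
rewrite (lA _ hLL); rot; rewrite hRR [in RHS]mxtrace_mulC !mulmxA //.
Qed.

Lemma e3 : \tr (adjmx Y *m Y) = \tr (P *m Q).
Proof.
rewrite /Y; adjs.
by rewrite (lA _ hLL); rot; rewrite hRR.
Qed.

Let K := adjmx W *m Z.
Let X1 := adjmx K *m P.
Let Y1 := Q *m adjmx K.

Lemma e4 : \tr (adjmx X1 *m Y1) = \tr (adjmx X *m X).
Proof.
rewrite /X1 /Y1 /X /K /W /Z; adjs.
by rewrite (lA _ hLL) [in RHS]mxtrace_mulC !mulmxA hRR.
Qed.

Lemma e5 : \tr (adjmx Y1 *m X1) = \tr (adjmx X *m X).
Proof.
rewrite /X1 /Y1 /X /K /W /Z; adjs.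
by rot; rewrite (lA _ hLL) [in RHS]mxtrace_mulC !mulmxA hRR.
Qed.

Lemma e6 : \tr (adjmx X1 *m X1) = \tr (adjmx A *m (Z *m adjmx Z) *m A).
Proof.
by rewrite -[in RHS]pA /X1 /K /W /Z; adjs.
Qed.

Lemma e7 : \tr (adjmx Y1 *m Y1) = \tr (adjmx B *m (W *m adjmx W) *m B).
Proof.
rewrite -[in RHS]pB /Y1 /K /W /Z; adjs.
by do 5! rot.
Qed.
Lemma key (mu : C) : 0 < mu ->
  \tr (adjmx A *m B) + \tr (adjmx B *m A) <=
  mu * ((\tr (adjmx A *m A) + \tr (adjmx B *m B)) / 2) + mu^-1 * \tr (P *m Q).
Proof.
move=> hmu.
have h1 := @amgm C n X Y mu hmu; rewrite e1 e2 e3 in h1.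
have h2 := @amgm C n X1 Y1 1 (@ltr01 C); rewrite e4 e5 invr1 !mul1r e6 e7 in h2.
have h6 : \tr (adjmx A *m (Z *m adjmx Z) *m A) <= \tr (adjmx A *m A).
  apply: proj_le; first by rewrite adjmxM adjmxK.
  exact: (projW _ _ _ hQ' hQQ hQQ'Q hQ'QQ' hQc).
have h7 : \tr (adjmx B *m (W *m adjmx W) *m B) <= \tr (adjmx B *m B).
  apply: proj_le; first by rewrite adjmxM adjmxK.
  exact: (projW _ _ _ hP' hPP hPP'P hP'PP' hPc).
apply: (le_trans h1); rewrite lerD2r ler_pM2l //.
rewrite ler_pdivlMr ?ltr0n // mulrDr mulr1.
exact: (le_trans h2 (lerD h6 h7)).
Qed.
End Key2.


Section Fin.
Context {C : numClosedFieldType} {n : nat}.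
Implicit Types A : 'M[C]_n.

Lemma normal_adj A : adjmx A *m A \is normalmx.
Proof. by apply/normalmxP; rewrite -!adjmxE adjmxM adjmxK. Qed.

Lemma mulVV (y : C) : y * y^-1 * y = y.
Proof.
by case: (eqVneq y 0) => [->|nz]; rewrite ?mulr0 ?mul0r // mulfV // mul1r.
Qed.

Lemma mulVV' (y : C) : y^-1 * y * y^-1 = y^-1.
Proof.
by case: (eqVneq y 0) => [->|nz]; rewrite ?invr0 ?mulr0 ?mul0r // mulVf // mul1r.
Qed.

Lemma fc_facts A :
  let H := adjmx A *m A in
  let P := fc H sqrtC in
  let P' := fc H (fun x => (sqrtC x)^-1) in
  let R := fc H (fun x => sqrtC (sqrtC x)) in
  adjmx P = P /\ adjmx P' = P' /\ adjmx R = R /\ P *m P = H /\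
      P *m P' *m P = P /\ P' *m P *m P' = P' /\ P *m P' = P' *m P /\ R *m R = P.
Proof.
move=> H P P' R.
have d0 := @d_adj C n H A (erefl H).
repeat split.
- by apply: fc_adj => i; rewrite geC0_conj // sqrtC_ge0.
- by apply: fc_adj => i; rewrite geC0_conj // invr_ge0 sqrtC_ge0.
- by apply: fc_adj => i; rewrite geC0_conj // !sqrtC_ge0.
- rewrite /P fcM -[RHS](@fc_id C n H (normal_adj A)); apply: fc_ext => i.
  by rewrite -expr2 sqrtCK.
- by rewrite /P /P' !fcM; apply: fc_ext => i; rewrite mulVV.
- by rewrite /P /P' !fcM; apply: fc_ext => i; rewrite mulVV'.
- by rewrite /P /P' !fcM; apply: fc_ext => i; rewrite mulrC.
- by rewrite /R /P fcM; apply: fc_ext => i; rewrite -expr2 sqrtCK.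
Qed.
End Fin.


Lemma main_gen (C : numClosedFieldType) (n : nat) (A B : 'M[C]_n) :
  frobnorm (A + B) <=
  sqrtC ((1 + sqrtC 2) / 2) * frobnorm (absmx A + absmx B).
Proof.
have EA : absmx A = fc (adjmx A *m A) sqrtC by [].
have EB : absmx B = fc (adjmx B *m B) sqrtC by [].
have [hP [hP' [hR [hPP [hPP'P [hP'PP' [hPc hRR]]]]]]] := fc_facts A.
have [hQ [hQ' [hL [hQQ [hQQ'Q [hQ'QQ' [hQc hLL]]]]]]] := fc_facts B.
rewrite EA EB.
set P := fc (adjmx A *m A) sqrtC in hP hPP hPP'P hP'PP' hPc hRR *.
set Q := fc (adjmx B *m B) sqrtC in hQ hQQ hQQ'Q hQ'QQ' hQc hLL *.
set s := sqrtC 2.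
have s1 : 1 < s by rewrite -sqrtC1 ltr_sqrtC ?ltr1n // qualifE /= ?ler01 ?ler0n. 
set mu := s - 1.
have hmu : 0 < mu by rewrite subr_gt0.
have muV : mu^-1 = s + 1.
  apply: (mulfI (lt0r_neq0 hmu)); rewrite mulfV ?lt0r_neq0 //.
  by rewrite /mu -subr_sqr sqrtCK expr1n; ring.
have K := key _ _ _ _ _ _ _ _ hP hP' hR hPP hPP'P hP'PP' hPc hRR hQ hQ' hL hQQ hQQ'Q hQ'QQ' hQc hLL _ hmu.
rewrite muV in K.
rewrite /frobnorm -sqrtCM; last 2 first.
- rewrite qualifE /= divr_ge0 ?ler0n // addr_ge0 ?ler01 //.
  by rewrite sqrtC_ge0 ler0n.
- by rewrite qualifE /= tr_adj_ge0.
rewrite ler_sqrtC; last 2 first.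
- by rewrite qualifE /= tr_adj_ge0.
- rewrite qualifE /= mulr_ge0 ?tr_adj_ge0 // divr_ge0 ?ler0n // addr_ge0 ?ler01 //.
  by rewrite sqrtC_ge0 ler0n.
rewrite !adjmxD !(mulmxDl, mulmxDr) !linearD /= hP hQ hPP hQQ.
rewrite [\tr (Q *m P)]mxtrace_mulC.
set a := \tr (adjmx A *m A); set b := \tr (adjmx B *m B).
set r := \tr (adjmx A *m B); set r' := \tr (adjmx B *m A); set p := \tr (P *m Q).
have -> : (1 + s) / 2 * (a + p + (p + b)) =
   (a + b) + (mu * ((a + b) / 2) + (s + 1) * p).
  by rewrite /mu; field.
have -> : a + r + (r' + b) = a + b + (r + r') by ring.
by rewrite lerD2l.
Qed.

Theorem mainTheorem1 (R : realType) (n : nat) (A B : 'M[R[i]]_n) :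
  frobnorm (A + B) <=
  sqrtC ((1 + sqrtC 2) / 2) * frobnorm (absmx A + absmx B).
Proof. exact: main_gen. Qed.
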